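(* Let $\mathcal L$ be an arbitrary finite lattice. Then the simplicial complex $\mathcal J(\mathcal L)$ collapses onto its subcomplex $\Delta(\bar{\mathcal L})$.
   Context: For a finite lattice $\mathcal L$ with minimum $\hat0$ and maximum $\hat1$, $\bar{\mathcal L}=\mathcal L\setminus\{\hat0,\hat1\}$. $\mathcal J(\mathcal L)$ is the simplicial complex with vertex set $\bar{\mathcal L}$ whose simplices are the nonempty subsets $S\subseteq\bar{\mathcal L}$ with $\bigwedge S\neq\hat0$. $\Delta(\bar{\mathcal L})$ is the order complex of $\bar{\mathcal L}$ (simplices = nonempty chains), which is a subcomplex of $\mathcal J(\mathcal L)$. *)

(* Defs.v *)
From HB Require Import structures.
From mathcomp Require Import all_boot all_order.
From Stdlib Require Import Relations.Relation_Operators.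
Set Implicit Arguments. Unset Strict Implicit. Unset Printing Implicit Defensive.
Import Order.Theory.
Local Open Scope order_scope.

(* A finite lattice L (with minimum \bot = 0^ and maximum \top = 1^) is a
   T : finTBLatticeType d.  Simplicial complexes are represented by their
   set of faces (nonempty finite vertex sets). *)

Section Defs.
Context {d : Order.disp_t} {T : finTBLatticeType d}.

Definition proper_part : {set T} :=
  [set x : T | (x != \bot) && (x != \top)].

Definition J_complex : {set {set T}} :=
  [set S : {set T} | [&& S != set0, S \subset proper_part
                       & \meet_(x in S) x != \bot]].

Definition is_chain (S : {set T}) : bool :=
  [forall x in S, forall y in S, (x <= y) || (y <= x)].

Definition order_complex : {set {set T}} :=
  [set S : {set T} | [&& S != set0, S \subset proper_part & is_chain S]].
End Defs.

Section Collapse.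
Context {V : finType}.

Definition elementary_collapse (K K' : {set {set V}}) : Prop :=
  exists sigma tau : {set V},
    [/\ sigma \in K, tau \in K, sigma \proper tau,
        (forall rho, rho \in K -> sigma \proper rho -> rho = tau)
      & K' = (K :\ sigma) :\ tau].

Definition collapses (K K' : {set {set V}}) : Prop :=
  clos_refl_trans _ elementary_collapse K K'.
End Collapse.

(* Main.v *)
Require Import Defs.
From mathcomp Require Import all_boot all_order.
From mathcomp Require Import zify.
From Stdlib Require Import Relations.Relation_Operators.
Set Implicit Arguments. Unset Strict Implicit. Unset Printing Implicit Defensive.
Import Order.Theory.
Local Open Scope order_scope.

Section Core.
Context {d : Order.disp_t} {T : finTBLatticeType d}.
Implicit Types (X Y Z : {set T}) (u v w x y : T).

Definition meetS X : T := \meet_(x in X) x.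
Definition strict X : bool := (meetS X \in X) && (meetS X < meetS (X :\ meetS X)).

Fixpoint gf (n : nat) X : option T :=
  if n is n'.+1 then
    if X == set0 then None
    else if strict X then gf n' (X :\ meetS X) else Some (meetS X)
  else None.
Fixpoint kf (n : nat) X : nat :=
  if n is n'.+1 then
    if X == set0 then 0
    else if strict X then (kf n' (X :\ meetS X)).+1 else 0
  else 0.

Definition g X := gf #|X| X.
Definition k X := kf #|X| X.

Lemma card_strict X : strict X -> #|X :\ meetS X|.+1 = #|X|.
Proof. by move=> /andP[h _]; rewrite (cardsD1 (meetS X) X) h. Qed.

Lemma gf_fuel n m X : (#|X| <= n)%N -> (#|X| <= m)%N -> gf n X = gf m X.
Proof.
elim: n m X => [|n IH] [|m] X hn hm /=.
- by [].
- have -> : X = set0 by apply/eqP; rewrite -cards_eq0; case: #|X| hn.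
  by rewrite eqxx.
- have -> : X = set0 by apply/eqP; rewrite -cards_eq0; case: #|X| hm.
  by rewrite eqxx.
- case: eqP => // _; case: ifP => // hs; apply: IH.
  + by rewrite -ltnS card_strict.
  + by rewrite -ltnS card_strict.
Qed.

Lemma kf_fuel n m X : (#|X| <= n)%N -> (#|X| <= m)%N -> kf n X = kf m X.
Proof.
elim: n m X => [|n IH] [|m] X hn hm /=.
- by [].
- have -> : X = set0 by apply/eqP; rewrite -cards_eq0; case: #|X| hn.
  by rewrite eqxx.
- have -> : X = set0 by apply/eqP; rewrite -cards_eq0; case: #|X| hm.
  by rewrite eqxx.
- case: eqP => // _; case: ifP => // hs; congr S; apply: IH.
  + by rewrite -ltnS card_strict.
  + by rewrite -ltnS card_strict.
Qed.

Lemma gE X : g X = if X == set0 then None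
  else if strict X then g (X :\ meetS X) else Some (meetS X).
Proof.
rewrite /g; case: eqP => [->|X0]; first by rewrite cards0.
have : (0 < #|X|)%N by rewrite card_gt0; apply/eqP.
case E: #|X| => [//|n] _ /=.
case: eqP => // _; case: ifP => // hs.
by apply: gf_fuel => //; rewrite -ltnS card_strict // E.
Qed.

Lemma kE X : k X = if X == set0 then 0
  else if strict X then (k (X :\ meetS X)).+1 else 0.
Proof.
rewrite /k; case: eqP => [->|X0]; first by rewrite cards0.
have : (0 < #|X|)%N by rewrite card_gt0; apply/eqP.
case E: #|X| => [//|n] _ /=.
case: eqP => // _; case: ifP => // hs; congr S.
by apply: kf_fuel => //; rewrite -ltnS card_strict // E.
Qed.

Lemma meetS_le x X : x \in X -> meetS X <= x.
Proof. by move=> h; apply: meets_inf. Qed.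
Lemma meetS_ge u X : (forall x, x \in X -> u <= x) -> u <= meetS X.
Proof. by move=> h; apply/meetsP. Qed.
Lemma meetS0 : meetS set0 = \top.
Proof. by rewrite /meetS big_set0. Qed.
Lemma meetSU1 w X : meetS (w |: X) = w `&` meetS X.
Proof. by rewrite /meetS meets_setU big_set1. Qed.
Lemma meetS_sub (A B : {set T}) : A \subset B -> meetS B <= meetS A.
Proof. exact: le_meets. Qed.


Lemma g_ge Z u : g Z = Some u -> meetS Z <= u.
Proof.
have [n] := ubnP #|Z|; elim: n Z => // n IH Z hZ.
rewrite gE; case: eqP => // Z0; case: ifP => [hs h|_ [<-]//].
apply: le_trans (IH _ _ h); last by rewrite -ltnS card_strict.
exact: meetS_sub (subD1set _ _).
Qed.

Lemma g_mem Z u : g Z = Some u -> exists2 z, z \in Z & u <= z.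
Proof.
have [n] := ubnP #|Z|; elim: n Z => // n IH Z hZ.
rewrite gE; case: eqP => // /eqP Z0; case: ifP => [hs h|_ [<-]].
  have [|z /setD1P[_ zZ] uz] := IH _ _ h; first by rewrite -ltnS card_strict.
  by exists z.
by have [z zZ] := set0Pn _ Z0; exists z => //; apply: meetS_le.
Qed.

Lemma chainP (S : {set T}) : reflect (forall x y, x \in S -> y \in S -> (x <= y) || (y <= x))
  (is_chain S).
Proof.
apply: (iffP forall_inP) => H.
  by move=> x y hx hy; apply: (forall_inP (H x hx)).
by move=> x hx; apply/forall_inP => y hy; apply: H.
Qed.

Lemma chain_sub (A B : {set T}) : A \subset B -> is_chain B -> is_chain A.
Proof.
move=> /subsetP AB /chainP H; apply/chainP => x y hx hy.
by apply: H; apply: AB.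
Qed.

Lemma chain_meet_in X : is_chain X -> X != set0 -> meetS X \in X.
Proof.
have [n] := ubnP #|X|; elim: n X => // n IH X hX ch /set0Pn[x xX].
rewrite -(setD1K xX) meetSU1.
have [->|X0] := eqVneq (X :\ x) set0.
  by rewrite meetS0 meetx1 setU11.
have hm : meetS (X :\ x) \in X :\ x.
  apply: IH => //; last exact: chain_sub (subD1set _ _) ch.
  by rewrite (cardsD1 x X) xX in hX.
move: (hm) => /setD1P[_ hmX].
case/orP: (chainP _ ch x _ xX hmX) => h.
  by rewrite meet_l // setU11.
by rewrite meet_r // setU1r.
Qed.

Lemma g_chain1 X : g X = None -> is_chain X.
Proof.
have [n] := ubnP #|X|; elim: n X => // n IH X hX.
rewrite gE; case: eqP => [->|X0].
  by move=> _; apply/chainP => x y; rewrite inE.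
case: ifP => // hs h.
have ch := IH (X :\ meetS X) (ltac:(by rewrite -ltnS card_strict)) h.
apply/chainP => x y hx hy.
have [->|xm] := eqVneq x (meetS X); first by rewrite (meetS_le hy).
have [->|ym] := eqVneq y (meetS X); first by rewrite (meetS_le hx) orbT.
by apply: (chainP _ ch); apply/setD1P.
Qed.

Lemma g_chain2 X : \top \notin X -> is_chain X -> g X = None.
Proof.
have [n] := ubnP #|X|; elim: n X => // n IH X hX tX ch.
rewrite gE; case: eqP => // /eqP X0.
have mX := chain_meet_in ch X0.
have hs : strict X.
  rewrite /strict mX /=.
  have [->|X10] := eqVneq (X :\ meetS X) set0.
    rewrite meetS0 lt_def lex1 andbT.
    by apply/eqP => ht; move: tX; rewrite ht mX.
  have h1 := chain_meet_in (chain_sub (subD1set _ _) ch) X10.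
  move: (h1) => /setD1P[ne _].
  rewrite lt_def ne /=; apply: meetS_ge => x /setD1P[_ xX].
  exact: meetS_le.
rewrite hs; apply: IH.
- by rewrite -ltnS card_strict.
- by apply: contra tX => /setD1P[].
- exact: chain_sub (subD1set _ _) ch.
Qed.


Lemma setU1_neq0' w X : (w |: X == set0) = false.
Proof. by apply/negbTE/set0Pn; exists w; rewrite setU11. Qed.

Lemma setD1U1 w X m : w != m -> (w |: X) :\ m = w |: (X :\ m).
Proof.
move=> wm; apply/setP => z; rewrite !inE.
by case: (eqVneq z w) => [->|]; rewrite ?wm.
Qed.

Lemma setD1C X a b : (X :\ a) :\ b = (X :\ b) :\ a.
Proof. by apply/setP => z; rewrite !inE; case: (z == a); case: (z == b). Qed.

Lemma g_up X v : g X = Some v -> v \notin X -> g (v |: X) = Some v.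
Proof.
have [n] := ubnP #|X|; elim: n X => // n IH X hX.
rewrite gE; case: eqP => // /eqP X0; case: ifP => [hs h vX|_ [<-] mX].
- have mX : meetS X \in X by case/andP: hs.
  have mlt : meetS X < meetS (X :\ meetS X) by case/andP: hs.
  have hv := g_ge h.
  have vX1 : v \notin X :\ meetS X by apply: contra vX => /setD1P[].
  have vm : v != meetS X by apply: contraNneq vX => ->.
  have e1 : meetS (v |: X) = meetS X.
    by rewrite meetSU1 meet_r // (le_trans (ltW mlt) hv).
  rewrite gE setU1_neq0'.
  have -> : strict (v |: X).
    by rewrite /strict e1 setU1r //= setD1U1 // meetSU1 meet_r.
  rewrite e1 setD1U1 //; apply: IH => //.
  by rewrite -ltnS card_strict.
- rewrite gE setU1_neq0' /strict meetSU1 meetxx setU11 setU1K // ltxx.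
  done.
Qed.

Lemma g_down X v : \top \notin X -> g X = Some v -> v \in X -> g (X :\ v) = Some v.
Proof.
have [n] := ubnP #|X|; elim: n X => // n IH X hX tX.
rewrite gE; case: eqP => // /eqP X0; case: ifP => [hs h vX|hs [<-] mX].
- have mX : meetS X \in X by case/andP: hs.
  have mlt : meetS X < meetS (X :\ meetS X) by case/andP: hs.
  have vm : v != meetS X.
    apply/eqP => e; have := g_ge h; rewrite e => /(lt_le_trans mlt).
    by rewrite ltxx.
  have vX1 : v \in X :\ meetS X by apply/setD1P.
  have IH' := IH (X :\ meetS X) (ltac:(by rewrite -ltnS card_strict))
    (ltac:(by apply: contra tX => /setD1P[])) h vX1.
  have mZ : meetS X \in X :\ v by apply/setD1P; rewrite eq_sym.
  have eZ : meetS (X :\ v) = meetS X.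
    apply/le_anti; rewrite meetS_le //=; apply: meetS_ge => x /setD1P[_ xX].
    exact: meetS_le.
  rewrite gE; have -> : (X :\ v == set0) = false.
    by apply/negbTE/set0Pn; exists (meetS X).
  have -> : strict (X :\ v).
    rewrite /strict eZ mZ /= setD1C.
    exact: lt_le_trans mlt (meetS_sub (subD1set _ _)).
  by rewrite eZ setD1C.
- have mtop : meetS X != \top by apply: contraNneq tX => <-.
  have le1 : meetS X <= meetS (X :\ meetS X).
    by apply: meetS_ge => x /setD1P[_ xX]; apply: meetS_le.
  have e1 : meetS (X :\ meetS X) = meetS X.
    move: hs; rewrite /strict mX /= lt_def le1 andbT => /negbT; rewrite negbK.
    by move/eqP.
  have X10 : (X :\ meetS X == set0) = false.
    apply/negbTE/eqP => e; move: e1; rewrite e meetS0 => e2.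
    by rewrite e2 eqxx in mtop.
  by rewrite gE X10 /strict e1 setD11.
Qed.

Lemma lemB X w u : X != set0 -> w \notin X -> ~~ (meetS X <= w) ->
  g (w |: X) = Some u -> u \in w |: X -> g X = Some u.
Proof.
move=> X0 wX nle hg hu.
have key : meetS (w |: X) \in w |: X -> meetS (w |: X) = w /\ strict (w |: X).
  move=> /setU1P [e|hX].
  - split => //; rewrite /strict e setU11 setU1K //= lt_def.
    have wle : w <= meetS X by rewrite -e meetSU1 leIr.
    rewrite wle andbT; apply: contra nle => /eqP ->; exact: lexx.
  - exfalso; move: nle; rewrite (le_trans (meetS_le hX)) //.
    by rewrite meetSU1 leIl.
move: hg; rewrite gE setU1_neq0'.
case: (boolP (meetS (w |: X) \in w |: X)) => hin.
  by have [e ->] := key hin; rewrite e setU1K.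
have -> : strict (w |: X) = false by rewrite /strict (negbTE hin).
by move=> [e]; rewrite -e in hu; rewrite hu in hin.
Qed.

Lemma lowup X v w u : g X = Some v -> v \notin X -> w \notin X -> w != v ->
  g (w |: X) = Some u -> u \in w |: X -> (k ((w |: X) :\ u) < k X)%N.
Proof.
have [n] := ubnP #|X|; elim: n X => // n IH X hX hg vX wX wv hgu hu.
have X0 : X != set0 by apply/eqP => e; move: hg; rewrite e gE eqxx.
have [mw|nmw] := boolP (meetS X <= w); last first.
  have := lemB X0 wX nmw hgu hu; rewrite hg => -[e].
  move: hu; rewrite -e => /setU1P[e'|vX'].
    by rewrite e' eqxx in wv.
  by rewrite vX' in vX.
have eY : meetS (w |: X) = meetS X by rewrite meetSU1 meet_r.
move: hg; rewrite gE (negbTE X0); case: ifP => [hs hg|hs [e]].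
- have mX : meetS X \in X by case/andP: hs.
  have mlt : meetS X < meetS (X :\ meetS X) by case/andP: hs.
  have mw' : w != meetS X by apply: contraNneq wX => ->.
  have e2 := setD1U1 X mw'.
  have vX1 : v \notin X :\ meetS X by apply: contra vX => /setD1P[].
  have wX1 : w \notin X :\ meetS X by apply: contra wX => /setD1P[].
  rewrite [k X]kE (negbTE X0) hs.
  move: hgu; rewrite gE setU1_neq0'.
  case: (boolP (meetS X < w `&` meetS (X :\ meetS X))) => b.
  + have hsY : strict (w |: X) by rewrite /strict eY setU1r // e2 meetSU1 b.
    rewrite hsY eY e2 => hgu1.
    have um : u != meetS X.
      apply/eqP=> e; have := g_ge hgu1; rewrite e meetSU1 => /(lt_le_trans b).
      by rewrite ltxx.
    have hu1 : u \in w |: (X :\ meetS X) by rewrite -e2; apply/setD1P.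
    have := IH (X :\ meetS X) (ltac:(by rewrite -ltnS card_strict)) hg vX1 wX1 wv hgu1 hu1.
    have mZ : meetS X \in (w |: X) :\ u by apply/setD1P; rewrite eq_sym setU1r.
    have eZ : meetS ((w |: X) :\ u) = meetS X.
      apply/le_anti; rewrite meetS_le //=; apply: meetS_ge => x /setD1P[_ xY].
      by rewrite -eY; apply: meetS_le.
    have eZ2 : ((w |: X) :\ u) :\ meetS X = (w |: (X :\ meetS X)) :\ u.
      by rewrite setD1C e2.
    have hsZ : strict ((w |: X) :\ u).
      rewrite /strict eZ mZ eZ2 /=; apply: lt_le_trans b _.
      by rewrite -meetSU1; apply: meetS_sub (subD1set _ _).
    have Z0 : ((w |: X) :\ u == set0) = false.
      by apply/negbTE/set0Pn; exists (meetS X).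
    by rewrite [k ((w |: X) :\ u)]kE Z0 hsZ eZ eZ2 ltnS.
  + have -> : strict (w |: X) = false by rewrite /strict eY e2 meetSU1 (negbTE b) andbF.
    move=> [<-]; rewrite eY e2 kE setU1_neq0'.
    have e3 : meetS (w |: (X :\ meetS X)) = meetS X.
      rewrite meetSU1; move: b; rewrite lt_def lexI mw (ltW mlt) andbT.
      by rewrite andbT negbK => /eqP.
    by rewrite /strict e3 !inE eq_sym (negbTE mw') eqxx.
- have mY : meetS X \notin w |: X.
    by rewrite !inE e negb_or eq_sym wv vX.
  move: hgu; rewrite gE setU1_neq0' /strict eY (negbTE mY) /= => -[eu].
  by move: hu; rewrite -eu (negbTE mY).
Qed.

End Core.

Section Main.
Context {d : Order.disp_t} {T : finTBLatticeType d}.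
Local Notation J := (@J_complex d T).
Local Notation D := (@order_complex d T).
Implicit Types (S X : {set T}) (L : {set {set T}}).

Definition lower S := if g S is Some v then v \notin S else false.
Definition upper S := if g S is Some v then v \in S else false.
Definition vtx S := odflt \top (g S).
Definition KK L : {set {set T}} :=
  [set S in J | [|| S \in D, lower S && (S \in L) | upper S && ((S :\ vtx S) \in L)]].
Definition mu S := (#|S| * (#|T|.+1) + (#|T| - k S))%N.
Definition PP : {set {set T}} := [set S in J | lower S].

Lemma inKK L S : (S \in KK L) =
  (S \in J) && [|| S \in D, lower S && (S \in L) | upper S && ((S :\ vtx S) \in L)].
Proof. by rewrite inE. Qed.

Lemma inJ S : (S \in J) = [&& S != set0, S \subset proper_part & meetS S != \bot].
Proof. by rewrite inE. Qed.

Lemma inD S : (S \in D) = [&& S != set0, S \subset proper_part & is_chain S].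
Proof. by rewrite inE. Qed.

Lemma J_top S : S \in J -> \top \notin S.
Proof.
rewrite inJ => /and3P[_ /subsetP h _]; apply/negP => /h.
by rewrite inE eqxx andbF.
Qed.

Lemma D_J S : S \in D -> S \in J.
Proof.
rewrite inD inJ => /and3P[S0 sub ch]; rewrite S0 sub /=.
have := chain_meet_in ch S0; move/subsetP: sub => sub /sub.
by rewrite inE => /andP[].
Qed.

Lemma notD S v : S \in J -> g S = Some v -> S \notin D.
Proof.
move=> SJ E; apply/negP; rewrite inD => /and3P[_ _ ch].
by rewrite g_chain2 // J_top in E.
Qed.

Lemma tau_J S v : S \in J -> g S = Some v -> v \notin S -> v |: S \in J.
Proof.
rewrite !inJ => /and3P[S0 sub mS] E vS.
rewrite setU1_neq0' /= subUset sub andbT meetSU1 meet_r ?(g_ge E) // mS andbT.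
rewrite sub1set inE; apply/andP; split.
  apply: contra mS => /eqP vb; have := g_ge E; rewrite vb lex0 => /eqP ->.
  by [].
have [z zS vz] := g_mem E.
move/subsetP: sub => /(_ z zS); rewrite inE => /andP[_ zt].
by apply: contra zt => /eqP vt; rewrite -le1x -vt.
Qed.

Lemma down_J S u : S \in J -> g S = Some u -> u \in S -> S :\ u \in J.
Proof.
move=> SJ E uS; have E' := g_down (J_top SJ) E uS.
move: SJ; rewrite !inJ => /and3P[S0 sub mS].
apply/and3P; split.
- by apply/eqP => e; move: E'; rewrite e gE eqxx.
- exact: subset_trans (subD1set _ _) sub.
- apply: contra mS => /eqP mb; have := meetS_sub (subD1set S u).
  by rewrite mb lex0.
Qed.

Lemma k_le X : (k X <= #|X|)%N.
Proof.
have [n] := ubnP #|X|; elim: n X => // n IH X hX.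
rewrite kE; case: eqP => // _; case: ifP => // hs.
by rewrite -card_strict // ltnS IH // -ltnS card_strict.
Qed.

Lemma K0 : KK set0 = D.
Proof.
apply/setP => S; rewrite inKK !in_set0 !andbF !orbF.
by case: (boolP (S \in D)) => h; rewrite ?andbF ?(D_J h).
Qed.

Lemma KP : KK PP = J.
Proof.
apply/setP => S; rewrite inKK; case: (boolP (S \in J)) => //= SJ.
case E: (g S) => [u|]; last first.
  by rewrite inD; move: SJ; rewrite inJ => /and3P[-> -> _]; rewrite g_chain1.
rewrite /lower /upper /vtx E /=.
case: (boolP (u \in S)) => uS /=.
  apply/orP; right; rewrite /PP in_set down_J //= /lower (g_down (J_top SJ) E uS).
  by rewrite !inE eqxx.
by apply/or3P; apply: Or32; rewrite /PP inE SJ /lower E uS.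
Qed.


Lemma k_T X : (k X <= #|T|)%N.
Proof. exact: leq_trans (k_le X) (max_card _). Qed.

Lemma mu_lt_card (A B : {set T}) : (#|A| < #|B|)%N -> (mu A < mu B)%N.
Proof.
rewrite /mu => h.
have h2 : (#|A|.+1 * #|T|.+1 <= #|B| * #|T|.+1)%N by rewrite leq_mul2r h orbT.
rewrite mulSn in h2; lia.
Qed.

Lemma mu_lt_k (A B : {set T}) : #|A| = #|B| -> (k A < k B)%N -> (mu B < mu A)%N.
Proof.
rewrite /mu => -> h.
have := k_T B; have := k_T A => h1 h2; lia.
Qed.

Lemma step L s : L \subset PP -> s \in L -> (forall S, S \in L -> (mu S <= mu s)%N) ->
  elementary_collapse (KK L) (KK (L :\ s)).
Proof.
move=> LP sL smax.
have := subsetP LP s sL; rewrite /PP inE => /andP[sJ]; rewrite /lower.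
case E: (g s) => [v|] // vs.
have tJ := tau_J sJ E vs.
have Et := g_up E vs.
have vt : v \in v |: s := setU11 v s.
have ts : (v |: s) :\ v = s := setU1K vs.
have sD := notD sJ E.
have tD := notD tJ Et.
have upt : upper (v |: s) by rewrite /upper Et.
have vtxt : vtx (v |: s) = v by rewrite /vtx Et.
have lowt : lower (v |: s) = false by rewrite /lower Et vt.
have ups : upper s = false by rewrite /upper E (negbTE vs).
have lows : lower s by rewrite /lower E.
exists s, (v |: s); split.
- by rewrite inKK sJ lows sL orbT.
- by rewrite inKK tJ upt vtxt ts sL !orbT.
- rewrite properEneq subsetUr andbT; apply/eqP => e.
  by move: vs; rewrite {1}e vt.
- move=> rho; rewrite inKK => /andP[rJ /or3P[rD|/andP[lr rL]|/andP[ur rL]]] srho.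
  + exfalso; move: rD; rewrite inD => /and3P[_ _ ch].
    have := g_chain2 (J_top sJ) (chain_sub (proper_sub srho) ch).
    by rewrite E.
  + exfalso; have h1 := smax _ rL; have h2 := mu_lt_card (proper_card srho).
    by move: (leq_trans h2 h1); rewrite ltnn.
  + move: ur rL; rewrite /upper /vtx; case Eu: (g rho) => [u|] //= ur rL.
    have hc := proper_card srho.
    have crho : #|rho| = (#|rho :\ u|).+1 by rewrite (cardsD1 u rho) ur.
    have hle := smax _ rL.
    have ceq : #|rho :\ u| = #|s|.
      apply/eqP; rewrite eqn_leq; apply/andP; split.
        rewrite leqNgt; apply/negP => h; have := mu_lt_card h.
        by rewrite ltnNge hle.
      by rewrite -ltnS -crho.
    have hsub := proper_sub srho.
    have c1 : #|rho :\: s| == 1%N.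
      have := cardsID s rho; rewrite (setIidPr hsub) crho ceq => h.
      by rewrite -(eqn_add2l #|s|) h addn1.
    case/cards1P: c1 => w hw.
    have : w \in rho :\: s by rewrite hw set11.
    rewrite in_setD => /andP[ws wr].
    have erho : rho = w |: s.
      apply/setP => z; rewrite in_setU1; case: (boolP (z \in s)) => zs.
        by rewrite orbT; exact: (subsetP hsub z zs).
      rewrite orbF; have : (z \in rho :\: s) = (z == w) by rewrite hw inE.
      by rewrite in_setD zs /=.
    have [wv|wv] := eqVneq w v; first by rewrite erho wv.
    exfalso; rewrite erho in Eu ur rL ceq hle.
    have hk := lowup E vs ws wv Eu ur.
    have := mu_lt_k ceq hk.
    by rewrite ltnNge hle.
- apply/setP => S; rewrite !in_setD1 !inKK.
  case: (eqVneq S s) => [->|Ss].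
    by rewrite sJ (negbTE sD) ups lows !in_setD1 eqxx /= andbF.
  case: (eqVneq S (v |: s)) => [->|St].
    by rewrite tJ (negbTE tD) lowt upt vtxt ts !in_setD1 !eqxx /=.
  rewrite !in_setD1 Ss /=.
  case: (boolP (S \in J)) => //= SJ.
  case: (boolP (upper S)) => //= uS.
  have key : S :\ vtx S != s.
    move: uS; rewrite /upper /vtx; case Eu: (g S) => [u|] //= uS.
    apply/eqP => e; have := g_down (J_top SJ) Eu uS; rewrite e E => -[vu].
    by move: St; rewrite -(setD1K uS) e vu eqxx.
  by rewrite key.
Qed.

Lemma collapse_KK L : L \subset PP -> collapses (KK L) D.
Proof.
have [n] := ubnP #|L|; elim: n L => // n IH L hL LP.
case: (set_0Vmem L) => [->|[s0 s0L]].
  by rewrite K0; apply: rt_refl.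
case: (@arg_maxnP _ s0 (fun S => S \in L) mu s0L) => s sL smax.
apply: (@rt_trans _ _ _ (KK (L :\ s))).
  by apply: rt_step; apply: step.
apply: IH.
  by rewrite (cardsD1 s L) sL in hL.
exact: subset_trans (subD1set _ _) LP.
Qed.

End Main.

Theorem mainTheorem6 (d : Order.disp_t) (T : finTBLatticeType d) :
  collapses (@J_complex d T) (@order_complex d T).
Proof.
by rewrite -(@KP d T); apply: collapse_KK; rewrite subxx.
Qed.
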